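(* Let $\mathcal F$ be a field and let $p\in\mathbb N$. Let $\mathbf{Mat}_{\mathcal F}$ be the category whose objects are natural numbers, whose arrows $M\colon m\to n$ are $n\times m$ matrices with entries in $\mathcal F$, and whose composition is matrix multiplication. Let $F\colon \mathbf{Mat}_{\mathcal F}\to\mathbf{Mat}_{\mathcal F}$ be the functor with $F(n)=p\cdot n$ on objects and $F(M)=I_p\otimes M$ (Kronecker product with the $p\times p$ identity matrix) on arrows. Then there exist families of matrices $\varphi=(\varphi_n\colon p^2n\to n)_{n}$, $\gamma=(\gamma_n\colon n\to p^2n)_n$ and $\chi=(\chi_n\colon p^2n\to p^2n)_n$ such that $\langle \mathbf{Mat}_{\mathcal F},F,\varphi,\gamma,\chi\rangle$ is a symmetric self-adjunction.
   Context: A symmetric self-adjunction is a quintuple $\langle\mathcal A,F,\varphi,\gamma,\chi\rangle$ where $\mathcal A$ is a category, $F\colon\mathcal A\to\mathcal A$ is a functor, and $\varphi\colon FF\to 1_{\mathcal A}$, $\gamma\colon 1_{\mathcal A}\to FF$, $\chi\colon FF\to FF$ are natural transformations such that for all objects $A$: $\varphi_{FA}\circ F\gamma_A=1_{FA}$ and $F\varphi_A\circ\gamma_{FA}=1_{FA}$ (triangular equations, i.e. $F$ is adjoint to itself with counit $\varphi$ and unit $\gamma$); $\chi_A\circ\chi_A=1_{FFA}$; $\chi_{FA}\circ F\chi_A\circ\chi_{FA}=F\chi_A\circ\chi_{FA}\circ F\chi_A$; $\varphi_A\circ\chi_A=\varphi_A$; $\chi_A\circ\gamma_A=\gamma_A$;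 $\varphi_{FA}\circ F\chi_A=F\varphi_A\circ\chi_{FA}$; $\chi_{FA}\circ F\gamma_A=F\chi_A\circ\gamma_{FA}$. *)

(* Defs.v *)
From mathcomp Require Import all_boot all_algebra.
From mathcomp Require Import mxtens.
Set Implicit Arguments. Unset Strict Implicit. Unset Printing Implicit Defensive.
Import GRing.Theory.
Local Open Scope ring_scope.

(* The category Mat_K: objects are natural numbers, an arrow m -> n is an
   n x m matrix 'M[K]_(n, m), composition (N o M) is N *m M, identities 1%:M. *)

Definition is_functor (K : fieldType) (Fo : nat -> nat)
  (Fa : forall m n : nat, 'M[K]_(n, m) -> 'M[K]_(Fo n, Fo m)) : Prop :=
  (forall n : nat, Fa n n (1%:M : 'M[K]_n) = 1%:M) /\
  (forall (m n k : nat) (M : 'M[K]_(n, m)) (N : 'M[K]_(k, n)),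
      Fa m k (N *m M) = Fa n k N *m Fa m n M).

Definition sym_self_adjunction (K : fieldType) (Fo : nat -> nat)
  (Fa : forall m n : nat, 'M[K]_(n, m) -> 'M[K]_(Fo n, Fo m))
  (phi : forall n : nat, 'M[K]_(n, Fo (Fo n)))
  (gamma : forall n : nat, 'M[K]_(Fo (Fo n), n))
  (chi : forall n : nat, 'M[K]_(Fo (Fo n))) : Prop :=
  is_functor Fa /\
  (forall (m n : nat) (M : 'M[K]_(n, m)),
      phi n *m Fa _ _ (Fa _ _ M) = M *m phi m) /\
  (forall (m n : nat) (M : 'M[K]_(n, m)),
      gamma n *m M = Fa _ _ (Fa _ _ M) *m gamma m) /\
  (forall (m n : nat) (M : 'M[K]_(n, m)),
      chi n *m Fa _ _ (Fa _ _ M) = Fa _ _ (Fa _ _ M) *m chi m) /\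
  (forall n : nat, phi (Fo n) *m Fa _ _ (gamma n) = 1%:M) /\
  (forall n : nat, Fa _ _ (phi n) *m gamma (Fo n) = 1%:M) /\
  (forall n : nat, chi n *m chi n = 1%:M) /\
  (forall n : nat, chi (Fo n) *m Fa _ _ (chi n) *m chi (Fo n)
                 = Fa _ _ (chi n) *m chi (Fo n) *m Fa _ _ (chi n)) /\
  (forall n : nat, phi n *m chi n = phi n) /\
  (forall n : nat, chi n *m gamma n = gamma n) /\
  (forall n : nat, phi (Fo n) *m Fa _ _ (chi n) = Fa _ _ (phi n) *m chi (Fo n)) /\
  (forall n : nat, chi (Fo n) *m Fa _ _ (gamma n) = Fa _ _ (chi n) *m gamma (Fo n)).

Definition Fobj (p : nat) (n : nat) : nat := p * n.
Definition Farr (K : fieldType) (p : nat) (m n : nat) (M : 'M[K]_(n, m))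
  : 'M[K]_(Fobj p n, Fobj p m) := tensmx (1%:M : 'M[K]_p) M.

(* Main.v *)
Require Import Defs.
From mathcomp Require Import all_boot all_algebra.
From mathcomp Require Import mxtens.
Set Implicit Arguments. Unset Strict Implicit. Unset Printing Implicit Defensive.
Import GRing.Theory.
Local Open Scope ring_scope.

Section Aux.
Variable K : fieldType.

Lemma sum_only (m : nat) (i : 'I_m) (F : 'I_m -> K) :
  (forall a, a != i -> F a = 0) -> \sum_a F a = F i.
Proof. by move=> H; rewrite (bigD1 i) //= big1 ?addr0 // => a /H. Qed.

Lemma sum_tens m q (F : 'I_(m * q) -> K) :
  \sum_c F c = \sum_(a < m) \sum_(k < q) F (mxtens_index (a, k)).
Proof.
rewrite (pair_bigA _ (fun a k => F (mxtens_index (a, k)))) /=.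
rewrite (reindex (@mxtens_index m q)) /=; first by apply: eq_bigr => -[].
by exists (@mxtens_unindex m q) => x _; rewrite ?mxtens_indexK ?mxtens_unindexK.
Qed.

Definition ev m (i : 'I_m) : 'cV[K]_m := \col_a (a == i)%:R.

Lemma tcolE m q (A : 'cV[K]_m) (B : 'cV[K]_q) a k z :
  (A *t B) (mxtens_index (a, k)) z = A a 0 * B k 0.
Proof. by rewrite mxE mxtens_indexK /= !ord1. Qed.

Lemma evT m q (i : 'I_m) (k : 'I_q) : ev (mxtens_index (i, k)) = ev i *t ev k.
Proof.
apply/matrixP=> r z; case: (mxtens_indexP r) => a b.
rewrite tcolE !mxE (can_eq (@mxtens_indexK m q)) xpair_eqE.
by case: (a == i); case: (b == k); rewrite /= ?mulr1 ?mulr0 ?mul0r.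
Qed.

Lemma ext_col r n (A B : 'M[K]_(r, n)) :
  (forall c, A *m ev c = B *m ev c) -> A = B.
Proof.
move=> H; apply/matrixP=> i c; have /matrixP /(_ i 0) := H c.
rewrite !mxE (sum_only (i:=c)) ?(sum_only (i:=c)) ?mxE ?eqxx ?mulr1 //.
  by move=> a /negbTE h; rewrite mxE h mulr0.
by move=> a /negbTE h; rewrite mxE h mulr0.
Qed.

Lemma extv r n (A B : 'M[K]_(r, n)) :
  (forall x : 'cV_n, A *m x = B *m x) -> A = B.
Proof. by move=> H; apply: ext_col. Qed.

Lemma ext1 r m q (A B : 'M[K]_(r, m * q)) :
  (forall i (y : 'cV_q), A *m (ev i *t y) = B *m (ev i *t y)) -> A = B.
Proof.
move=> H; apply: ext_col => c; case: (mxtens_indexP c) => i k.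
by rewrite evT H.
Qed.

Lemma ext2 r m m' q (A B : 'M[K]_(r, m * (m' * q))) :
  (forall i j (y : 'cV_q), A *m (ev i *t (ev j *t y)) = B *m (ev i *t (ev j *t y))) -> A = B.
Proof.
move=> H; apply: ext_col => c; case: (mxtens_indexP c) => i c'.
case: (mxtens_indexP c') => j k.
by rewrite !evT H.
Qed.

Lemma ext3 r m m' m'' q (A B : 'M[K]_(r, m * (m' * (m'' * q)))) :
  (forall i j l (y : 'cV_q), A *m (ev i *t (ev j *t (ev l *t y)))
                = B *m (ev i *t (ev j *t (ev l *t y)))) -> A = B.
Proof.
move=> H; apply: ext_col => c; case: (mxtens_indexP c) => i c'.
case: (mxtens_indexP c') => j c''; case: (mxtens_indexP c'') => l k.
by rewrite !evT H.
Qed.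

Lemma tensmxZr m n r s (A : 'M[K]_(m, n)) (c : K) (B : 'M[K]_(r, s)) :
  A *t (c *: B) = c *: (A *t B).
Proof. by apply/matrixP=> i j; rewrite !mxE mulrCA. Qed.

Lemma tensmx_sumr m n r s I (P : seq I) (A : 'M[K]_(m, n)) (B : I -> 'M[K]_(r, s)) :
  A *t (\sum_(i <- P) B i) = \sum_(i <- P) A *t B i.
Proof.
apply/matrixP=> i j; rewrite !mxE !summxE mulr_sumr.
by apply: eq_bigr => k _; rewrite !mxE.
Qed.

Lemma sum_delta_scale m r s (i : 'I_m) (V : 'I_m -> 'M[K]_(r, s)) :
  \sum_j ((i == j)%:R *: V j) = V i.
Proof.
rewrite (bigD1 i) //= eqxx scale1r big1 ?addr0 // => j.
by rewrite eq_sym => /negbTE ->; rewrite scale0r.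
Qed.

Variable p : nat.
Local Notation u := mxtens_unindex.

Definition phiM n : 'M[K]_(n, p * (p * n)) :=
  \matrix_(r, c) (((u c).1 == (u (u c).2).1)%:R * (r == (u (u c).2).2)%:R).
Definition gammaM n : 'M[K]_(p * (p * n), n) :=
  \matrix_(r, c) (((u r).1 == (u (u r).2).1)%:R * ((u (u r).2).2 == c)%:R).
Definition chiM n : 'M[K]_(p * (p * n)) :=
  \matrix_(r, c) (((u r).1 == (u (u c).2).1)%:R * ((u (u r).2).1 == (u c).1)%:R
                  * ((u (u r).2).2 == (u (u c).2).2)%:R).

Lemma phiE n i j (x : 'cV[K]_n) : phiM n *m (ev i *t (ev j *t x)) = (i == j)%:R *: x.
Proof.
apply/matrixP=> r z; rewrite !mxE sum_tens.
under eq_bigr => a _ do rewrite sum_tens.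
under eq_bigr => a _ do under eq_bigr => b _ do under eq_bigr => k _
  do rewrite mxE !mxtens_indexK /= !tcolE !mxE.
rewrite (sum_only (i:=i)); last first.
  by move=> a /negbTE h; apply: big1 => b _; apply: big1 => k _; rewrite h !(mul0r, mulr0).
rewrite (sum_only (i:=j)); last first.
  by move=> b /negbTE h; apply: big1 => k _; rewrite h !(mul0r, mulr0).
rewrite (sum_only (i:=r)); last first.
  by move=> k; rewrite eq_sym => /negbTE h; rewrite h !(mul0r, mulr0).
by rewrite !eqxx !(mulr1, mul1r) !ord1.
Qed.

Lemma gammaE n (x : 'cV[K]_n) : gammaM n *m x = \sum_i (ev i *t (ev i *t x)).
Proof.
apply/matrixP=> r z; case: (mxtens_indexP r) => a r'; case: (mxtens_indexP r') => b k.
rewrite !mxE summxE.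
under eq_bigr => c _ do rewrite mxE !mxtens_indexK /=.
under [in RHS]eq_bigr => c _ do rewrite !tcolE !mxE.
rewrite (sum_only (i:=k)); last first.
  by move=> c; rewrite eq_sym => /negbTE h; rewrite h !(mul0r, mulr0).
rewrite (sum_only (i:=a)); last first.
  by move=> c; rewrite eq_sym => /negbTE h; rewrite h !(mul0r, mulr0).
rewrite !eqxx !(mulr1, mul1r) !ord1.
by rewrite eq_sym.
Qed.

Lemma chiE n i j (x : 'cV[K]_n) : chiM n *m (ev i *t (ev j *t x)) = ev j *t (ev i *t x).
Proof.
apply/matrixP=> r z; case: (mxtens_indexP r) => a r'; case: (mxtens_indexP r') => b k.
rewrite !tcolE [LHS]mxE sum_tens.
under eq_bigr => c _ do rewrite sum_tens.
under eq_bigr => a' _ do under eq_bigr => b' _ do under eq_bigr => k' _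
  do rewrite !tcolE mxE !mxtens_indexK /= !mxE.
rewrite !mxE.
rewrite (sum_only (i:=b)); last first.
  by move=> a'; rewrite eq_sym => /negbTE h; apply: big1 => b' _; apply: big1 => k' _; rewrite h !(mul0r, mulr0).
rewrite (sum_only (i:=a)); last first.
  by move=> b'; rewrite eq_sym => /negbTE h; apply: big1 => k' _; rewrite h !(mul0r, mulr0).
rewrite (sum_only (i:=k)); last first.
  by move=> k'; rewrite eq_sym => /negbTE h; rewrite h !(mul0r, mulr0).
rewrite !eqxx !(mulr1, mul1r) ?ord1.
by case: (b == i); case: (a == j); rewrite ?(mulr1, mul1r, mul0r, mulr0).
Qed.

Lemma FE m n (M : 'M[K]_(n, m)) i (y : 'cV_m) :
  Farr p M *m (ev i *t y) = ev i *t (M *m y).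
Proof. by rewrite /Farr tensmx_mul mul1mx. Qed.

End Aux.

Theorem mainTheorem1 (K : fieldType) (p : nat) :
  exists (phi : forall n : nat, 'M[K]_(n, Fobj p (Fobj p n)))
         (gamma : forall n : nat, 'M[K]_(Fobj p (Fobj p n), n))
         (chi : forall n : nat, 'M[K]_(Fobj p (Fobj p n))),
    sym_self_adjunction (@Farr K p) phi gamma chi.
Proof.
exists (@phiM K p), (@gammaM K p), (@chiM K p).
split; [split|].
  move=> n; apply: ext1 => i y; by rewrite FE !mul1mx.
  by move=> m n k M N; rewrite /Farr tensmx_mul mulmx1.
split.
  move=> m n M; apply: ext2 => i j y.
  by rewrite -!mulmxA !FE !phiE scalemxAr.
split.
  move=> m n M; apply: extv => x.
  rewrite -!mulmxA !gammaE !mulmx_sumr; apply: eq_bigr => i _.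
  by rewrite !FE.
split.
  move=> m n M; apply: ext2 => i j y.
  by rewrite -!mulmxA !FE !chiE !FE.
split.
  move=> n; apply: ext1 => i y.
  rewrite -mulmxA FE gammaE tensmx_sumr mulmx_sumr mul1mx.
  under eq_bigr => j _ do rewrite phiE.
  by rewrite sum_delta_scale.
split.
  move=> n; apply: ext1 => i y.
  rewrite -mulmxA gammaE mulmx_sumr mul1mx.
  under eq_bigr => j _ do rewrite FE phiE tensmxZr.
  rewrite (eq_bigr (fun j => (i == j)%:R *: (ev _ j *t y))) ?sum_delta_scale //.
  by move=> j _; rewrite eq_sym.
split.
  move=> n; apply: ext2 => i j y.
  by rewrite -mulmxA !chiE mul1mx.
split.
  move=> n; apply: ext3 => i j l y.
  by rewrite -!mulmxA !(FE, chiE).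
split.
  move=> n; apply: ext2 => i j y.
  by rewrite -mulmxA chiE !phiE eq_sym.
split.
  move=> n; apply: extv => x.
  rewrite -mulmxA !gammaE mulmx_sumr; apply: eq_bigr => i _.
  by rewrite chiE.
split.
  move=> n; apply: ext3 => i j l y.
  by rewrite -!mulmxA FE chiE phiE chiE FE phiE tensmxZr.
move=> n; apply: ext1 => i y.
rewrite -!mulmxA FE gammaE gammaE tensmx_sumr !mulmx_sumr.
by apply: eq_bigr => j _; rewrite chiE FE chiE.
Qed.
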